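(* Let $k$ be a field, $n\ge5$ an integer, $q\in k$ a primitive $n$-th root of unity, and $\mathcal{C}=(a_{ij})_{t\times t}$ the Cartan matrix of a finite-dimensional semisimple simply laced Lie algebra. In the Hopf algebra $\Pi^{\mathcal{C}}$ described in the context, for all $x\in\mathbb{Z}_n^t$ and $i,j\in\{1,\dots,t\}$ with $i\ne j$, setting $\kappa=1-a_{ij}$, $$\Delta(\omega_{ij}(x))=\sum_{u+v=x}q^{\kappa u_i+u_j}e_u\otimes\omega_{ij}(v)+\sum_{u+v=x}\omega_{ij}(u)\otimes e_v,$$ $$\Delta(\omega_{ij}(x)^* )=\sum_{u+v=x}e_u\otimes\omega_{ij}(v)^*+\sum_{u+v=x}q^{-\kappa v_i-v_j}\omega_{ij}(u)^*\otimes e_v.$$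
   Context: Notation: $\mathbb{Z}_n=\mathbb{Z}/n\mathbb{Z}$; $c^i\in\mathbb{Z}_n^t$ is the $i$-th column of $\mathcal{C}$ reduced mod $n$; $x_i$ is the $i$-th coordinate of $x\in\mathbb{Z}_n^t$; $q^m$ for $m\in\mathbb{Z}_n$ is well defined. $[m]_y=\frac{y^m-y^{-m}}{y-y^{-1}}$, $[m]!_y=[m]_y\cdots[1]_y$, $[0]!_y=1$, $\begin{bmatrix} m\\ s\end{bmatrix}_y=\frac{[m]!_y}{[s]!_y[m-s]!_y}$. Quiver: $\overline{\mathcal{Q}}$ has vertex set $\mathbb{Z}_n^t$ and arrows $a(x,i):x-c^i\to x$, $a(x,i)^*:x\to x-c^i$. In $k\overline{\mathcal{Q}}$ paths compose right to left (product of paths $p,p'$ is $pp'$ if source of $p$ = target of $p'$, else 0); $e_x$ is the trivial path at $x$. $a(x,i_1\cdots i_s)=a(x,i_1)a(x-c^{i_1},i_2)\cdots a(x-c^{i_1}-\cdots-c^{i_{s-1}},i_s)$ and $a(x,i_1\cdots i_s)^*=a(x-c^{i_1}-\cdots-c^{i_{s-1}},i_s)^*\cdots a(x-c^{i_1},i_2)^*a(x,i_1)^*$; $i^s$ denotes $s$ consecutive letters $i$. Define $\omega_{ij}(x)=\sum_{t=0}^{\kappa}(-1)^t\begin{bmatrix}\kappa\\ t\end{bmatrix}_q a(x,i^{\kappa-t}\,j\,i^t)$ and $\omega_{ij}(x)^*=\sum_{t=0}^{\kappa}(-1)^t\begin{bmatrix}\kappa\\ t\end{bmatrix}_q a(x,i^{\kappa-t}\,j\,i^t)^*$.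 $\Pi^{\mathcal{C}}=k\overline{\mathcal{Q}}/I$, $I$ generated by $a(x,i)a(x,i)^*-a(x+c^i,i)^*a(x+c^i,i)-\frac{q^{x_i}-q^{-x_i}}{q-q^{-1}}e_x$ (all $x,i$) and $a(x,j)^*a(x,i)-a(x-c^j,i)a(x-c^i,j)^*$ (all $x$, $i\ne j$). It is a Hopf algebra with $\Delta(e_x)=\sum_{u+v=x}e_u\otimes e_v$, $\Delta(a(x,i))=\sum_{u+v=x}q^{u_i}e_u\otimes a(v,i)+\sum_{u+v=x}a(u,i)\otimes e_v$, $\Delta(a(x,i)^* )=\sum_{u+v=x}e_u\otimes a(v,i)^*+\sum_{u+v=x}q^{-v_i}a(u,i)^*\otimes e_v$. *)

(* Defs.v *)
From HB Require Import structures.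
From mathcomp Require Import all_boot all_order all_algebra.
Set Implicit Arguments. Unset Strict Implicit. Unset Printing Implicit Defensive.
Import Order.TTheory GRing.Theory Num.Theory.
Local Open Scope ring_scope.

Definition simply_laced_cartan (t : nat) (C : 'M[int]_t) : Prop :=
  [/\ (forall i, C i i = 2),
      (forall i j, i != j -> C i j = 0 \/ C i j = -1),
      (forall i j, C i j = C j i)
    & (forall v : 'rV[rat]_t, v != 0 -> 0 < (v *m map_mx intr C *m v^T) 0 0)].

(* Vertices: Z_n^t (n >= 2 assumed where used, so 'Z_n = Z/nZ). *)
Notation vtx n t := 'rV['Z_n]_t.

Section PathAlg.
Variables (k : fieldType) (n t : nat) (C : 'M[int]_t) (q : k).

Definition colv (i : 'I_t) : vtx n t := \row_l ((C l i)%:~R : 'Z_n).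

(* arrows: (x,i,false) = a(x,i) : x - c^i -> x ;
           (x,i,true)  = a(x,i)^* : x -> x - c^i *)
Definition arrow := (vtx n t * 'I_t * bool)%type.
Definition asrc (a : arrow) : vtx n t :=
  let: (x, i, b) := a in if b then x else x - colv i.
Definition atgt (a : arrow) : vtx n t :=
  let: (x, i, b) := a in if b then x - colv i else x.

(* a path (x, [:: a1; ...; am]) is the product a1 a2 ... am (composition right
   to left) with target x; (x, [::]) is the trivial path e_x. *)
Definition path := (vtx n t * seq arrow)%type.
Definition psrc (p : path) : vtx n t :=
  if p.2 is a :: s then asrc (last a s) else p.1.
Definition pmul (p p' : path) : option path :=
  if psrc p == p'.1 then Some (p.1, p.2 ++ p'.2) else None.

(* elements of kQ as formal linear combinations of paths *)
Definition elt := seq (k * path).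
Definition coef (e : elt) (p : path) : k := \sum_(z <- e | z.2 == p) z.1.
Definition escale (c : k) (e : elt) : elt := [seq (c * z.1, z.2) | z <- e].
Definition eopp (e : elt) : elt := escale (-1) e.
Definition emul (e1 e2 : elt) : elt :=
  flatten [seq flatten [seq (if pmul z1.2 z2.2 is Some p
                             then [:: (z1.1 * z2.1, p)] else [::]) | z2 <- e2]
          | z1 <- e1].
Definition ebasis (x : vtx n t) : elt := [:: (1, (x, [::]))].
Definition earr (a : arrow) : elt := [:: (1, (atgt a, [:: a]))].

(* elements of kQ (x) kQ as formal combinations of pairs of paths *)
Definition tens := seq (k * path * path).
Definition tcoef (T : tens) (p p' : path) : k :=
  \sum_(z <- T | (z.1.2 == p) && (z.2 == p')) z.1.1.
Definition tscale (c : k) (T : tens) : tens := [seq (c * z.1.1, z.1.2, z.2) | z <- T].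
Definition topp (T : tens) : tens := tscale (-1) T.
Definition tmul (T1 T2 : tens) : tens :=
  flatten [seq flatten [seq
     (match pmul z1.1.2 z2.1.2, pmul z1.2 z2.2 with
      | Some p, Some p' => [:: (z1.1.1 * z2.1.1, p, p')]
      | _, _ => [::] end) | z2 <- T2] | z1 <- T1].
Definition etens (e1 e2 : elt) : tens :=
  [seq (z1.1 * z2.1, z1.2, z2.2) | z1 <- e1, z2 <- e2].

Definition allv : seq (vtx n t) := enum {: vtx n t}.

Definition qp (m : 'Z_n) : k := q ^+ (val m).
Definition qm (m : 'Z_n) : k := q ^- (val m).

Definition DeltaE (x : vtx n t) : tens :=
  flatten [seq etens (ebasis u) (ebasis (x - u)) | u : vtx n t <- allv].
Definition DeltaA (a : arrow) : tens :=
  let: (x, i, b) := a in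
  if b then
    flatten [seq etens (ebasis u) (earr (x - u, i, true)) | u : vtx n t <- allv] ++
    flatten [seq tscale (qm ((x - u) 0 i)) (etens (earr (u, i, true)) (ebasis (x - u)))
            | u : vtx n t <- allv]
  else
    flatten [seq tscale (qp (u 0 i)) (etens (ebasis u) (earr (x - u, i, false)))
            | u : vtx n t <- allv] ++
    flatten [seq etens (earr (u, i, false)) (ebasis (x - u)) | u : vtx n t <- allv].
Definition DeltaP (p : path) : tens :=
  foldr (fun a T => tmul (DeltaA a) T) (DeltaE (psrc p)) p.2.
Definition Delta (e : elt) : tens :=
  flatten [seq tscale z.1 (DeltaP z.2) | z <- e].

Definition qint (m : nat) : k := (q ^+ m - q ^- m) / (q - q^-1).
Definition qfact (m : nat) : k := \prod_(1 <= l < m.+1) qint l.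
Definition qbinom (m s : nat) : k := qfact m / (qfact s * qfact (m - s)).
Definition qintZ (m : 'Z_n) : k := (qp m - qm m) / (q - q^-1).

Fixpoint aw (x : vtx n t) (w : seq 'I_t) : elt :=
  if w is i :: w' then emul (earr (x, i, false)) (aw (x - colv i) w') else ebasis x.
Fixpoint aws (x : vtx n t) (w : seq 'I_t) : elt :=
  if w is i :: w' then emul (aws (x - colv i) w') (earr (x, i, true)) else ebasis x.

Definition kappa (i j : 'I_t) : nat := `|1 - C i j|%N.
Definition omega (x : vtx n t) (i j : 'I_t) : elt :=
  let K := kappa i j in
  flatten [seq escale ((-1) ^+ s * qbinom K s) (aw x (nseq (K - s) i ++ j :: nseq s i))
          | s <- iota 0 K.+1].
Definition omegas (x : vtx n t) (i j : 'I_t) : elt :=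
  let K := kappa i j in
  flatten [seq escale ((-1) ^+ s * qbinom K s) (aws x (nseq (K - s) i ++ j :: nseq s i))
          | s <- iota 0 K.+1].

(* generators of the ideal I: gen (x,i,i) is the first relation at (x,i),
   gen (x,i,j) with i != j is the second relation at (x,i,j) *)
Definition relg (g : vtx n t * 'I_t * 'I_t) : elt :=
  let: (x, i, j) := g in
  if i == j then
    emul (earr (x, i, false)) (earr (x, i, true)) ++
    eopp (emul (earr (x + colv i, i, true)) (earr (x + colv i, i, false))) ++
    eopp (escale (qintZ (x 0 i)) (ebasis x))
  else
    emul (earr (x, j, true)) (earr (x, i, false)) ++
    eopp (emul (earr (x - colv j, i, false)) (earr (x - colv i, j, true))).

(* a spanning element of I (x) kQ + kQ (x) I:  c (p g p') (x) P  or  P (x) c (p g p') *)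
Definition iterm (z : k * path * (vtx n t * 'I_t * 'I_t) * path * path * bool) : tens :=
  let: (c, p, g, p', P, side) := z in
  let m := emul (emul [:: (c, p)] (relg g)) [:: (1, p')] in
  if side then etens m [:: (1, P)] else etens [:: (1, P)] m.

(* T lies in the kernel of kQ (x) kQ -> Pi (x) Pi *)
Definition in_ker (T : tens) : Prop :=
  exists L : seq (k * path * (vtx n t * 'I_t * 'I_t) * path * path * bool),
    forall P P', tcoef T P P' = tcoef (flatten [seq iterm z | z <- L]) P P'.

(* equality in Pi^C (x) Pi^C *)
Definition teqPi (T1 T2 : tens) : Prop := in_ker (T1 ++ topp T2).

End PathAlg.

(* Main.v *)
Require Import Defs.
From HB Require Import structures.
From mathcomp Require Import all_boot all_order all_algebra.
From mathcomp Require Import ring.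
Import Order.TTheory GRing.Theory Num.Theory.
Local Open Scope ring_scope.

Section Impl.
Set Implicit Arguments. Unset Strict Implicit. Unset Printing Implicit Defensive.

Section Gen.
Variables (k : fieldType) (n t : nat) (C : 'M[int]_t) (q : k).
Local Notation V := (vtx n t).
Local Notation P := (Defs.path n t).
Local Notation T := (tens k n t).

Definition hm (z1 z2 : k * P * P) : T :=
  match pmul C z1.1.2 z2.1.2, pmul C z1.2 z2.2 with
  | Some p, Some p' => [:: (z1.1.1 * z2.1.1, p, p')]
  | _, _ => [::] end.

Lemma tmulE (T1 T2 : T) : tmul C T1 T2 = flatten [seq flatten [seq hm z1 z2 | z2 <- T2] | z1 <- T1].
Proof. by []. Qed.

Lemma sumn_flatten_swap (A B : Type) (s1 : seq A) (s2 : seq B) (f : A -> B -> nat) :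
  sumn [seq sumn [seq f a b | b <- s2] | a <- s1] = sumn [seq sumn [seq f a b | a <- s1] | b <- s2].
Proof.
rewrite !sumnE !big_map.
rewrite (eq_bigr (fun a => \sum_(b <- s2) f a b)); last by move=> a _; rewrite sumnE big_map.
rewrite [RHS](eq_bigr (fun b => \sum_(a <- s1) f a b)); last by move=> b _; rewrite sumnE big_map.
exact: exchange_big.
Qed.

Lemma count_flatten2 (A B : Type) (X : eqType) (a : pred X) (h : A -> B -> seq X) s1 s2 :
  count a (flatten [seq flatten [seq h x y | y <- s2] | x <- s1]) =
  sumn [seq sumn [seq count a (h x y) | y <- s2] | x <- s1].
Proof.
elim: s1 => //= x s1 IH; rewrite count_cat IH; congr (_ + _)%N.
by clear IH; elim: s2 => //= y s2 IH2; rewrite count_cat IH2.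
Qed.

Lemma tmul_swap (T1 T2 : T) :
  perm_eq (tmul C T1 T2) (flatten [seq flatten [seq hm z1 z2 | z1 <- T1] | z2 <- T2]).
Proof.
rewrite tmulE; apply/permP => a.
rewrite count_flatten2 (count_flatten2 a (fun z2 z1 => hm z1 z2)).
exact: sumn_flatten_swap.
Qed.

Lemma flatten_single (X : Type) (F : V -> seq X) u0 :
  (forall u, u != u0 -> F u = [::]) -> flatten [seq F u | u <- allv n t] = F u0.
Proof.
move=> H.
have E : forall s, flatten [seq F u | u <- s] = flatten [seq F u | u <- [seq u <- s | pred1 u0 u]].
  elim=> //= a s IH; case: eqVneq => [->|ne] /=; first by rewrite IH.
  by rewrite IH H // eq_sym.
rewrite E filter_pred1_uniq /= ?cats0 //; first exact: enum_uniq.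
by rewrite mem_enum.
Qed.

Lemma tmul_collapse (f : V -> k * P * P) (g : k * P * P -> V) (T2 : T) :
  (forall z2 u, u != g z2 -> hm (f u) z2 = [::]) ->
  perm_eq (tmul C (flatten [seq [:: f u] | u <- allv n t]) T2)
          (flatten [seq hm (f (g z2)) z2 | z2 <- T2]).
Proof.
move=> H; apply: perm_trans (tmul_swap _ _) _.
rewrite flatten_map1; apply/permP => a; congr count; congr flatten; apply: eq_map => z2.
by rewrite -map_comp (flatten_single (F := fun u => hm (f u) z2) (u0 := g z2)) // => u; apply: H.
Qed.

Lemma tmul_perm_r (T1 T2 T2' : T) : perm_eq T2 T2' -> perm_eq (tmul C T1 T2) (tmul C T1 T2').
Proof.
move=> H; rewrite !tmulE; apply/permP => a; rewrite !count_flatten; congr sumn.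
rewrite -!map_comp; apply: eq_map => z1 /=.
by apply/permP; apply: perm_flatten; apply: perm_map.
Qed.

Lemma tmul_cat_l (T1 T1' T2 : T) : tmul C (T1 ++ T1') T2 = tmul C T1 T2 ++ tmul C T1' T2.
Proof. by rewrite !tmulE map_cat flatten_cat. Qed.

Lemma perm_flatten_map (A X : eqType) (f g : A -> seq X) s :
  (forall x, x \in s -> perm_eq (f x) (g x)) -> perm_eq (flatten (map f s)) (flatten (map g s)).
Proof.
elim: s => //= a s IH H; apply: perm_cat; first by apply: H; rewrite inE eqxx.
by apply: IH => x xs; apply: H; rewrite inE xs orbT.
Qed.

Lemma flatten_map_cat (A X : Type) (f g : A -> seq X) s :
  flatten [seq f u ++ g u | u <- s] = flatten [seq f u ++ g u | u <- s].
Proof. by []. Qed.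

Lemma perm_flatten_cat (A : Type) (X : eqType) (f g : A -> seq X) s :
  perm_eq (flatten [seq f u ++ g u | u <- s]) (flatten (map f s) ++ flatten (map g s)).
Proof.
elim: s => //= a s IH; rewrite -!catA perm_cat2l.
apply: (@perm_trans _ (g a ++ (flatten (map f s) ++ flatten (map g s)))).
  by rewrite perm_cat2l.
by rewrite perm_catCA.
Qed.

Lemma flatten_map_flatten (A B X : Type) (h : B -> seq X) (G : A -> seq B) s :
  flatten (map h (flatten (map G s))) = flatten [seq flatten (map h (G u)) | u <- s].
Proof. by elim: s => //= a s IH; rewrite map_cat flatten_cat IH. Qed.

End Gen.


Section Paths.
Variables (k : fieldType) (n t : nat) (C : 'M[int]_t) (q : k).
Local Notation V := (vtx n t).
Local Notation P := (Defs.path n t).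
Local Notation T := (tens k n t).
Local Notation c := (colv n C).

Fixpoint ap (x : V) (w : seq 'I_t) : P :=
  if w is i :: w' then (x, (x, i, false) :: (ap (x - c i) w').2) else (x, [::]).
Fixpoint sp (x : V) (rw : seq 'I_t) : P :=
  if rw is i :: rw' then ((sp x rw').1 - c i, ((sp x rw').1, i, true) :: (sp x rw').2)
  else (x, [::]).

Lemma ap1 x w : (ap x w).1 = x. Proof. by case: w. Qed.

Lemma psrc_ap x i w : psrc C (ap x (i :: w)) = psrc C (ap (x - c i) w).
Proof. by case: w. Qed.

Lemma psrc_sp x rw : psrc C (sp x rw) = x.
Proof.
elim: rw => //= i [|j rw] IH //.
Qed.

Lemma DeltaP_cons (v v' : V) (a : arrow n t) s : psrc C (v, a :: s) = psrc C (v', s) ->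
  DeltaP C q (v, a :: s) = tmul C (DeltaA C q a) (DeltaP C q (v', s)).
Proof. by rewrite /DeltaP /= => ->. Qed.

Lemma aw_ap x w : aw k C x w = [:: (1, ap x w)].
Proof.
elim: w x => //= i w IH x; rewrite IH /emul /= /pmul /= ap1 eqxx /= mulr1.
by [].
Qed.

Lemma sp_rcons x rw i : sp x (rcons rw i) = ((sp (x - c i) rw).1, (sp (x - c i) rw).2 ++ [:: (x, i, true)]).
Proof. by elim: rw => //= j rw ->. Qed.

Lemma aws_sp x w : aws k C x w = [:: (1, sp x (rev w))].
Proof.
elim: w x => //= i w IH x; rewrite IH /emul /= /pmul /= psrc_sp eqxx /= mulr1.
by rewrite rev_cons sp_rcons.
Qed.

Lemma DeltaA_false (x : V) i : DeltaA C q (x, i, false) =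
  flatten [seq [:: (qp q (u 0 i), (u, [::]), (x - u, [:: (x - u, i, false)]))] | u : V <- allv n t] ++
  flatten [seq [:: (1, (u, [:: (u, i, false)]), (x - u, [::]))] | u : V <- allv n t].
Proof. by rewrite /DeltaA; congr (_ ++ _); apply: congr1; apply: eq_map => u; rewrite /etens /earr /ebasis /= ?mulr1. Qed.

Lemma DeltaA_true (y : V) i : DeltaA C q (y, i, true) =
  flatten [seq [:: (1, (u, [::]), (y - u - c i, [:: (y - u, i, true)]))] | u : V <- allv n t] ++
  flatten [seq [:: (qm q ((y - u) 0 i), (u - c i, [:: (u, i, true)]), (y - u, [::]))] | u : V <- allv n t].
Proof. by rewrite /DeltaA; congr (_ ++ _); apply: congr1; apply: eq_map => u; rewrite /etens /earr /ebasis /= ?mulr1. Qed.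

Lemma DeltaE_eq (x : V) : DeltaE k x = flatten [seq [:: (1, (u, [::]), (x - u, [::]))] | u : V <- allv n t].
Proof. by rewrite /DeltaE; apply: congr1; apply: eq_map => u; rewrite /etens /earr /ebasis /= ?mulr1. Qed.

End Paths.


Lemma flatten_map_single (A X : Type) (h : A -> seq X) (m : A -> X) s :
  (forall z, h z = [:: m z]) -> flatten (map h s) = map m s.
Proof. by move=> H; elim: s => //= a s ->; rewrite H. Qed.

Lemma flatten_map_single_in (A : eqType) (X : Type) (h : A -> seq X) (m : A -> X) s :
  (forall z, z \in s -> h z = [:: m z]) -> flatten (map h s) = map m s.
Proof.
elim: s => //= a s IH H; rewrite H ?inE ?eqxx // IH // => z zs.
by apply: H; rewrite inE zs orbT.
Qed.

Section NF.
Variables (k : fieldType) (n t : nat) (C : 'M[int]_t) (q : k).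
Local Notation V := (vtx n t).
Local Notation P := (Defs.path n t).
Local Notation T := (tens k n t).
Local Notation c := (colv n C).
Local Notation ap := (ap C).
Local Notation sp := (sp C).

Lemma perm_allv_shift (X : eqType) (F : V -> seq X) (d : V) :
  perm_eq (flatten [seq F (u + d) | u : V <- allv n t]) (flatten [seq F u | u : V <- allv n t]).
Proof.
rewrite (map_comp F (fun u => u + d)); apply: perm_flatten; apply: perm_map.
apply: uniq_perm; first by rewrite map_inj_uniq ?enum_uniq //; exact: addIr.
  exact: enum_uniq.
move=> y; rewrite mem_enum; apply/mapP; exists (y - d); first by rewrite mem_enum.
by rewrite subrK.
Qed.

Lemma ap_eta (v : V) w : (v, (ap v w).2) = ap v w. Proof. by case: w. Qed.

Fixpoint Hn (w : seq 'I_t) (u : V) : seq (k * seq 'I_t * seq 'I_t) :=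
  if w is i :: w' then
    [seq (qp q (u 0 i) * z.1.1, z.1.2, i :: z.2) | z <- Hn w' u] ++
    [seq (z.1.1, i :: z.1.2, z.2) | z <- Hn w' (u - c i)]
  else [:: (1, [::], [::])].

Definition mkn (x u : V) (z : k * seq 'I_t * seq 'I_t) : k * P * P :=
  (z.1.1, ap u z.1.2, ap (x - u) z.2).
Definition NFn (x : V) w := flatten [seq map (mkn x u) (Hn w u) | u : V <- allv n t].

Lemma DeltaP_ap (x : V) w : perm_eq (DeltaP C q (ap x w)) (NFn x w).
Proof.
elim: w x => [|i w IH] x.
  by rewrite /DeltaP /= DeltaE_eq.
have H1 : DeltaP C q (ap x (i :: w)) = tmul C (DeltaA C q (x, i, false)) (DeltaP C q (ap (x - c i) w)).
  have := psrc_ap C x i w; rewrite /=.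
  case: (ap (x - c i) w) => v s /= Hs; exact: DeltaP_cons.
rewrite H1; apply: perm_trans (tmul_perm_r _ _ (IH (x - c i))) _.
rewrite DeltaA_false tmul_cat_l.
pose A (u : V) := [seq (qp q (u 0 i) * z.1.1, z.1.2, i :: z.2) | z <- Hn w u].
pose B (u : V) := [seq (z.1.1, i :: z.1.2, z.2) | z <- Hn w (u - c i)].
apply: (@perm_trans _ (flatten [seq map (mkn x u) (A u) | u : V <- allv n t] ++
                       flatten [seq map (mkn x u) (B u) | u : V <- allv n t])); last first.
  rewrite perm_sym /NFn.
  rewrite (eq_map (g := fun u : V => map (mkn x u) (A u) ++ map (mkn x u) (B u))); last first.
    by move=> u; rewrite /= map_cat.
  exact: perm_flatten_cat.
apply: perm_cat.
- apply: perm_trans (tmul_collapse (f := fun u : V => (qp q (u 0 i), (u, [::]), (x - u, [:: (x - u, i, false)])))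
                        (g := fun z => z.1.2.1) _ _) _.
    by move=> z2 u ne; rewrite /hm /pmul /= (negbTE ne).
  rewrite /NFn flatten_map_flatten; apply/permP => a; congr count; congr flatten.
  apply: eq_map => u; rewrite -map_comp /A -map_comp; apply: flatten_map_single => z /=.
  have E : x - u - c i = x - c i - u by rewrite addrAC.
  by rewrite /hm /mkn /pmul /psrc /= !ap1 eqxx E eqxx /= ap_eta.
- have TC := tmul_collapse (f := fun u : V => ((1 : k), (u, [:: (u, i, false)]), (x - u, [::])))
                        (g := fun z : k * P * P => z.1.2.1 + c i) (NFn (x - c i) w).
  apply: (perm_trans (TC C _)).
    by move=> z2 u ne; rewrite /hm /pmul /= subr_eq (negbTE ne).
  have S := perm_allv_shift (fun u : V => map (mkn x u) (B u)) (c i).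
  apply: (perm_trans _ S); rewrite /NFn flatten_map_flatten; apply/permP => a; congr count; congr flatten.
  apply: eq_map => u /=; rewrite /B addrK -!map_comp; apply: flatten_map_single => z /=.
  have E : x - (u + c i) = x - c i - u by rewrite opprD addrA addrAC.
  by rewrite /hm /mkn /pmul /psrc /= !ap1 addrK eqxx /= E eqxx /= mul1r ap_eta.
Qed.


Fixpoint Sw (w : seq 'I_t) : V := if w is l :: w' then c l + Sw w' else 0.

Lemma sp1 (x : V) rw : (sp x rw).1 = x - Sw rw.
Proof.
elim: rw => /= [|i rw ->]; first by rewrite subr0.
by apply/rowP => m; rewrite !mxE; ring.
Qed.

Fixpoint Hs (v : V) (rw : seq 'I_t) : seq (k * seq 'I_t * seq 'I_t) :=
  if rw is i :: rw' then
    [seq (z.1.1, z.1.2, i :: z.2) | z <- Hs v rw'] ++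
    [seq (qm q ((sp v z.2).1 0 i) * z.1.1, i :: z.1.2, z.2) | z <- Hs v rw']
  else [:: (1, [::], [::])].

Lemma Hs_inv (v : V) rw z : z \in Hs v rw -> Sw z.1.2 + Sw z.2 = Sw rw.
Proof.
elim: rw z => [|i rw IH] z /=; first by rewrite inE => /eqP -> /=; rewrite addr0.
rewrite mem_cat => /orP [] /mapP [z' z'in ->] /=; have := IH _ z'in.
  by move=> <-; apply/rowP => m; rewrite !mxE; ring.
by move=> <-; apply/rowP => m; rewrite !mxE; ring.
Qed.

Definition mks (x u : V) (z : k * seq 'I_t * seq 'I_t) : k * P * P :=
  (z.1.1, sp u z.1.2, sp (x - u) z.2).
Definition NFs (x : V) rw := flatten [seq map (mks x u) (Hs (x - u) rw) | u : V <- allv n t].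

Lemma DeltaP_sp (x : V) rw : perm_eq (DeltaP C q (sp x rw)) (NFs x rw).
Proof.
elim: rw => [|i rw IH].
  by rewrite /DeltaP /= DeltaE_eq.
have H1 : DeltaP C q (sp x (i :: rw)) = tmul C (DeltaA C q ((sp x rw).1, i, true)) (DeltaP C q (sp x rw)).
  have := psrc_sp C x (i :: rw); have := psrc_sp C x rw; rewrite /=.
  case: (sp x rw) => v s /= H2 H3; apply: DeltaP_cons; by rewrite H2 H3.
rewrite H1; apply: perm_trans (tmul_perm_r _ _ IH) _.
rewrite DeltaA_true tmul_cat_l.
set y := (sp x rw).1.
pose A (u : V) := [seq (z.1.1, z.1.2, i :: z.2) | z <- Hs (x - u) rw].
pose B (u : V) := [seq (qm q ((sp (x - u) z.2).1 0 i) * z.1.1, i :: z.1.2, z.2) | z <- Hs (x - u) rw].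
apply: (@perm_trans _ (flatten [seq map (mks x u) (A u) | u : V <- allv n t] ++
                       flatten [seq map (mks x u) (B u) | u : V <- allv n t])); last first.
  rewrite perm_sym /NFs.
  rewrite (eq_map (g := fun u : V => map (mks x u) (A u) ++ map (mks x u) (B u))); last first.
    by move=> u; rewrite /= map_cat.
  exact: perm_flatten_cat.
have E : forall u z, z \in Hs (x - u) rw -> y - (sp u z.1.2).1 = (sp (x - u) z.2).1.
  move=> u z /Hs_inv; rewrite /y !sp1 => <-.
  by apply/rowP => m; rewrite !mxE; ring.
apply: perm_cat.
- have TC := tmul_collapse (f := fun u : V => ((1 : k), (u, [::]), (y - u - c i, [:: (y - u, i, true)])))
                        (g := fun z : k * P * P => z.1.2.1) (NFs x rw).
  apply: (perm_trans (TC C _)).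
    by move=> z2 u ne; rewrite /hm /pmul /= (negbTE ne).
  rewrite /NFs flatten_map_flatten; apply/permP => a; congr count; congr flatten.
  apply: eq_map => u /=; rewrite -!map_comp; apply: flatten_map_single_in => z zin /=.
  rewrite /hm /mks /pmul /psrc /= eqxx /= E // eqxx /= mul1r.
  by rewrite -surjective_pairing.
- have TC := tmul_collapse (f := fun u : V => (qm q ((y - u) 0 i), (u - c i, [:: (u, i, true)]), (y - u, [::])))
                        (g := fun z : k * P * P => z.1.2.1) (NFs x rw).
  apply: (perm_trans (TC C _)).
    by move=> z2 u ne; rewrite /hm /pmul /= (negbTE ne).
  rewrite /NFs flatten_map_flatten; apply/permP => a; congr count; congr flatten.
  apply: eq_map => u /=; rewrite -!map_comp; apply: flatten_map_single_in => z zin /=.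
  rewrite /hm /mks /pmul /psrc /= eqxx /= E // eqxx /=.
  by rewrite -surjective_pairing.
Qed.

End NF.


Section Tc.
Variables (k : fieldType) (n t : nat) (C : 'M[int]_t) (q : k).
Local Notation V := (vtx n t).
Local Notation P := (Defs.path n t).
Local Notation T := (tens k n t).

Definition ind (p p' P1 P2 : P) : k := ((p == P1) && (p' == P2))%:R.

Lemma tcoef_sum (T1 : T) P1 P2 : tcoef T1 P1 P2 = \sum_(z <- T1) z.1.1 * ind z.1.2 z.2 P1 P2.
Proof.
rewrite /tcoef big_mkcond; apply: eq_bigr => z _ /=; rewrite /ind.
by case: ifP => _; rewrite ?mulr1 ?mulr0.
Qed.

Lemma tcoef_cat (T1 T2 : T) P1 P2 : tcoef (T1 ++ T2) P1 P2 = tcoef T1 P1 P2 + tcoef T2 P1 P2.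
Proof. by rewrite /tcoef big_cat. Qed.

Lemma tcoef_perm (T1 T2 : T) P1 P2 : perm_eq T1 T2 -> tcoef T1 P1 P2 = tcoef T2 P1 P2.
Proof. by move=> H; rewrite /tcoef (perm_big _ H). Qed.

Lemma tcoef_flatten (L : seq T) P1 P2 : tcoef (flatten L) P1 P2 = \sum_(l <- L) tcoef l P1 P2.
Proof. by rewrite /tcoef big_flatten. Qed.

Lemma tcoef_scale a (T1 : T) P1 P2 : tcoef (tscale a T1) P1 P2 = a * tcoef T1 P1 P2.
Proof. by rewrite /tcoef /tscale big_map big_distrr. Qed.

Lemma teqPi_of (T1 T2 : T) : (forall P1 P2, tcoef T1 P1 P2 = tcoef T2 P1 P2) -> teqPi C q T1 T2.
Proof.
move=> H; exists [::] => P1 P2; rewrite tcoef_cat /topp tcoef_scale H /tcoef /= big_nil.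
by rewrite mulN1r subrr.
Qed.

Lemma tcoef_Delta (e : elt k n t) P1 P2 :
  tcoef (Delta C q e) P1 P2 = \sum_(z <- e) z.1 * tcoef (DeltaP C q z.2) P1 P2.
Proof. by rewrite /Delta tcoef_flatten big_map; apply: eq_bigr => z _; rewrite tcoef_scale. Qed.

Lemma tcoef_etens_l (p : P) (e : elt k n t) P1 P2 :
  tcoef (etens [:: (1, p)] e) P1 P2 = \sum_(z <- e) z.1 * ind p z.2 P1 P2.
Proof. by rewrite tcoef_sum /etens /= cats0 big_map; apply: eq_bigr => z _ /=; rewrite mul1r. Qed.

Lemma tcoef_etens_r (p : P) (e : elt k n t) P1 P2 :
  tcoef (etens e [:: (1, p)]) P1 P2 = \sum_(z <- e) z.1 * ind z.2 p P1 P2.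
Proof. by rewrite tcoef_sum /etens /= flatten_map1 big_map; apply: eq_bigr => z _ /=; rewrite mulr1. Qed.

Definition wd (K : nat) (i j : 'I_t) (s : nat) := nseq (K - s) i ++ j :: nseq s i.
Definition cf (K s : nat) : k := (-1) ^+ s * qbinom q K s.

Lemma omega_eq (x : V) i j : omega C q x i j =
  [seq (cf (kappa C i j) s * 1, ap C x (wd (kappa C i j) i j s)) | s <- iota 0 (kappa C i j).+1].
Proof. by rewrite /omega -[RHS]flatten_map1; congr (flatten _); apply: eq_map => s; rewrite aw_ap. Qed.

End Tc.

Arguments ap : simpl never.
Arguments sp : simpl never.
Arguments qp : simpl never.
Arguments qm : simpl never.
Arguments ind : simpl never.

Section Ar.
Variables (k : fieldType) (n t : nat) (C : 'M[int]_t) (q : k).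
Hypothesis hq : n.-primitive_root q.
Hypothesis hn : (4 < n)%N.
Local Notation V := (vtx n t).
Local Notation qp := (@qp k n).
Local Notation qm := (@qm k n).

Lemma hn1 : (1 < n)%N. Proof. by apply: leq_trans hn. Qed.

Lemma qpD (a b : 'Z_n) : qp q (a + b) = qp q a * qp q b.
Proof.
rewrite /qp -exprD /=; move: (nat_of_ord a + nat_of_ord b)%N => m.
by rewrite Zp_cast ?hn1 // (prim_expr_mod hq).
Qed.
Lemma qp0 : qp q (0 : 'Z_n) = 1.
Proof. by rewrite /qp /= expr0. Qed.
Lemma qp1 : qp q (1 : 'Z_n) = q.
Proof. by rewrite /qp /= modn_small // expr1. Qed.
Lemma q0 : q != 0.
Proof.
apply/eqP => q0; move: (prim_expr_order hq); rewrite q0 expr0n.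
have -> : (n == 0)%N = false by case: n hn.
by move/eqP; rewrite eq_sym oner_eq0.
Qed.
Lemma qp_neq0 a : qp q a != 0.
Proof. by rewrite /qp expf_neq0 // q0. Qed.
Lemma qpN (a : 'Z_n) : qp q (- a) = (qp q a)^-1.
Proof.
have H : qp q (- a) * qp q a = 1 by rewrite -qpD addNr qp0.
by apply: (mulIf (qp_neq0 a)); rewrite H mulVf // qp_neq0.
Qed.
Lemma qpB (a b : 'Z_n) : qp q (a - b) = qp q a / qp q b.
Proof. by rewrite qpD qpN. Qed.
Lemma qp_nat m : qp q (m%:R : 'Z_n) = q ^+ m.
Proof. by elim: m => [|m IH]; rewrite ?qp0 ?expr0 // -addn1 natrD qpD IH qp1 exprD expr1. Qed.
Lemma qp2 : qp q ((2 : int)%:~R : 'Z_n) = q ^+ 2.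
Proof. by rewrite pmulrn qp_nat. Qed.
Lemma qpm1 : qp q ((-1 : int)%:~R : 'Z_n) = q^-1.
Proof. by rewrite mulrN1z qpN qp1. Qed.
Lemma qpz0 : qp q ((0 : int)%:~R : 'Z_n) = 1.
Proof. by rewrite mulr0z qp0. Qed.
Lemma qmE (a : 'Z_n) : qm q a = (qp q a)^-1.
Proof. by []. Qed.
Lemma ent (u : V) l m : (u - colv n C l) 0 m = u 0 m - (C m l)%:~R.
Proof. by rewrite !mxE. Qed.

Lemma q2 : q ^+ 2 != 1.
Proof. by rewrite -(prim_order_dvd hq); apply/negP => /dvdn_leq le; have := leq_trans hn (le isT). Qed.
Lemma q4 : q ^+ 4 != 1.
Proof. by rewrite -(prim_order_dvd hq); apply/negP => /dvdn_leq le; have := leq_trans hn (le isT). Qed.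

End Ar.

Section Red.
Variables (k : fieldType) (n t : nat) (C : 'M[int]_t) (q : k).
Local Notation V := (vtx n t).
Local Notation ind := (@ind k n t).

Lemma lhs_n (x : V) i j P1 P2 (K := kappa C i j) :
  tcoef (Delta C q (omega C q x i j)) P1 P2 =
  \sum_(u <- allv n t) \sum_(s <- iota 0 K.+1) cf q K s * 1 *
     \sum_(z <- Hn C q (wd K i j s) u) z.1.1 * ind (ap C u z.1.2) (ap C (x - u) z.2) P1 P2.
Proof.
rewrite tcoef_Delta omega_eq big_map exchange_big /=.
apply: eq_bigr => s _; rewrite (tcoef_perm _ _ (DeltaP_ap _ _ _ _)) /NFn tcoef_flatten big_map big_distrr.
apply: eq_bigr => u _; rewrite tcoef_sum big_map; congr (_ * _); apply: eq_bigr => z _ //.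
Qed.

Lemma rhs_n (x : V) i j P1 P2 (K := kappa C i j) :
  tcoef (flatten [seq tscale (q ^+ (K * val (u 0 i) + val (u 0 j)))
                      (etens (ebasis k u) (omega C q (x - u) i j)) | u : V <- allv n t] ++
       flatten [seq etens (omega C q u i j) (ebasis k (x - u)) | u : V <- allv n t]) P1 P2 =
  \sum_(u <- allv n t) (q ^+ (K * val (u 0 i) + val (u 0 j)) *
      \sum_(s <- iota 0 K.+1) cf q K s * 1 * ind (u, [::]) (ap C (x - u) (wd K i j s)) P1 P2 +
      \sum_(s <- iota 0 K.+1) cf q K s * 1 * ind (ap C u (wd K i j s)) (x - u, [::]) P1 P2).
Proof.
rewrite tcoef_cat !tcoef_flatten !big_map -big_split; apply: eq_bigr => u _ /=.
by rewrite tcoef_scale tcoef_etens_l tcoef_etens_r !omega_eq !big_map.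
Qed.

Lemma omegas_eq (x : V) i j : omegas C q x i j =
  [seq (cf q (kappa C i j) s * 1, sp C x (rev (wd (kappa C i j) i j s))) | s <- iota 0 (kappa C i j).+1].
Proof. by rewrite /omegas -[RHS]flatten_map1; congr (flatten _); apply: eq_map => s; rewrite aws_sp. Qed.

Lemma lhs_s (x : V) i j P1 P2 (K := kappa C i j) :
  tcoef (Delta C q (omegas C q x i j)) P1 P2 =
  \sum_(u <- allv n t) \sum_(s <- iota 0 K.+1) cf q K s * 1 *
     \sum_(z <- Hs C q (x - u) (rev (wd K i j s))) z.1.1 * ind (sp C u z.1.2) (sp C (x - u) z.2) P1 P2.
Proof.
rewrite tcoef_Delta omegas_eq big_map exchange_big /=.
apply: eq_bigr => s _; rewrite (tcoef_perm _ _ (DeltaP_sp _ _ _ _)) /NFs tcoef_flatten big_map big_distrr.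
apply: eq_bigr => u _; rewrite tcoef_sum big_map; congr (_ * _); apply: eq_bigr => z _ //.
Qed.

Lemma rhs_s (x : V) i j P1 P2 (K := kappa C i j) :
  tcoef (flatten [seq etens (ebasis k u) (omegas C q (x - u) i j) | u : V <- allv n t] ++
       flatten [seq tscale (q ^- (K * val ((x - u) 0 i) + val ((x - u) 0 j)))
                      (etens (omegas C q u i j) (ebasis k (x - u))) | u : V <- allv n t]) P1 P2 =
  \sum_(u <- allv n t) (
      \sum_(s <- iota 0 K.+1) cf q K s * 1 * ind (u, [::]) (sp C (x - u) (rev (wd K i j s))) P1 P2 +
      q ^- (K * val ((x - u) 0 i) + val ((x - u) 0 j)) *
      \sum_(s <- iota 0 K.+1) cf q K s * 1 * ind (sp C u (rev (wd K i j s))) (x - u, [::]) P1 P2).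
Proof.
rewrite tcoef_cat !tcoef_flatten !big_map -big_split; apply: eq_bigr => u _ /=.
by rewrite tcoef_scale tcoef_etens_l tcoef_etens_r !omegas_eq !big_map.
Qed.

End Red.


Section Fin.
Variables (k : fieldType) (n t : nat) (C : 'M[int]_t) (q : k).
Hypothesis hq : n.-primitive_root q.
Hypothesis hn : (4 < n)%N.
Local Notation V := (vtx n t).
Local Notation ind := (@ind k n t).

Let q0 := q0 hq hn.
Lemma qsub0 : q - q^-1 != 0.
Proof.
apply: contra (q2 hq hn); rewrite subr_eq0 => /eqP H.
by rewrite expr2 {1}H mulVf.
Qed.
Lemma qadd0 : q + q^-1 != 0.
Proof.
apply: contra (q4 hq hn); rewrite addr_eq0 => /eqP H.
have H2 : q * q = -1 by rewrite {1}H mulNr mulVf.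
by rewrite (_ : 4 = 2 * 2)%N // exprM [q ^+ 2]expr2 H2 expr2 mulrNN mulr1.
Qed.
Lemma qint1 : qint q 1 = 1.
Proof. by rewrite /qint expr1 divff // qsub0. Qed.
Lemma qint2 : qint q 2 = q + q^-1.
Proof.
rewrite /qint; apply: (mulIf qsub0); rewrite mulrVK ?unitfE ?qsub0 //.
by field.
Qed.
Lemma qfact0 : qfact q 0 = 1. Proof. by rewrite /qfact big_geq. Qed.
Lemma qfact1 : qfact q 1 = 1. Proof. by rewrite /qfact big_nat1 qint1. Qed.
Lemma qfact2 : qfact q 2 = q + q^-1.
Proof. by rewrite /qfact big_nat_recr // big_nat1 /= qint1 qint2 mul1r. Qed.
Lemma qb10 : qbinom q 1 0 = 1. Proof. by rewrite /qbinom qfact0 qfact1 !mul1r invr1. Qed.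
Lemma qb11 : qbinom q 1 1 = 1. Proof. by rewrite /qbinom /= subnn qfact0 qfact1 !mul1r invr1. Qed.
Lemma qb20 : qbinom q 2 0 = 1. Proof. by rewrite /qbinom qfact0 qfact2 mul1r divff // qadd0. Qed.
Lemma qb21 : qbinom q 2 1 = q + q^-1. Proof. by rewrite /qbinom /= !qfact1 qfact2 mul1r invr1 mulr1. Qed.
Lemma qb22 : qbinom q 2 2 = 1. Proof. by rewrite /qbinom subnn qfact0 qfact2 mulr1 divff // qadd0. Qed.

Lemma ap0 (v : V) : ap C v [::] = (v, [::]). Proof. by []. Qed.

Lemma peru_n2 (x u : V) i j P1 P2 : C i i = 2 -> C j j = 2 -> C i j = -1 -> C j i = -1 ->
 \sum_(s <- iota 0 3) cf q 2 s * 1 * \sum_(z <- Hn C q (wd 2 i j s) u) z.1.1 * ind (ap C u z.1.2) (ap C (x - u) z.2) P1 P2 =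
 q ^+ (2 * val (u 0 i) + val (u 0 j)) * \sum_(s <- iota 0 3) cf q 2 s * 1 * ind (u, [::]) (ap C (x - u) (wd 2 i j s)) P1 P2 + \sum_(s <- iota 0 3) cf q 2 s * 1 * ind (ap C u (wd 2 i j s)) (x - u, [::]) P1 P2.
Proof.
move=> Cii Cjj Cij Cji.
rewrite /= !big_cons !big_nil /= /wd /= !ap0 !ent !(qpB hq hn) ?Cii ?Cjj ?Cij ?Cji (qp2 hq hn) (qpm1 hq hn) /cf qb20 qb21 qb22.
rewrite exprD mulnC exprM -[q ^+ (val (u 0 i))]/(qp q (u 0 i)) -[q ^+ (val (u 0 j))]/(qp q (u 0 j)).
by field; rewrite q0 oner_eq0.
Qed.

Lemma peru_n1 (x u : V) i j P1 P2 : C i i = 2 -> C j j = 2 -> C i j = 0 -> C j i = 0 ->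
 \sum_(s <- iota 0 2) cf q 1 s * 1 * \sum_(z <- Hn C q (wd 1 i j s) u) z.1.1 * ind (ap C u z.1.2) (ap C (x - u) z.2) P1 P2 =
 q ^+ (1 * val (u 0 i) + val (u 0 j)) * \sum_(s <- iota 0 2) cf q 1 s * 1 * ind (u, [::]) (ap C (x - u) (wd 1 i j s)) P1 P2 + \sum_(s <- iota 0 2) cf q 1 s * 1 * ind (ap C u (wd 1 i j s)) (x - u, [::]) P1 P2.
Proof.
move=> Cii Cjj Cij Cji.
rewrite /= !big_cons !big_nil /= /wd /= !ap0 !ent !(qpB hq hn) ?Cii ?Cjj ?Cij ?Cji ?(qp2 hq hn) ?(qpm1 hq hn) ?qpz0 /cf qb10 qb11.
rewrite exprD mul1n -[q ^+ (val (u 0 i))]/(qp q (u 0 i)) -[q ^+ (val (u 0 j))]/(qp q (u 0 j)).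
by field; rewrite oner_eq0.
Qed.

Lemma sp0 (v : V) : sp C v [::] = (v, [::]). Proof. by []. Qed.

Lemma qpSw (v : V) w m : qp q ((v - Sw n C w) 0 m) = qp q (v 0 m) * \prod_(l <- w) (qp q ((C m l)%:~R : 'Z_n))^-1.
Proof.
elim: w v => [|l w IH] v /=; first by rewrite subr0 big_nil mulr1.
have -> : v - (colv n C l + Sw n C w) = (v - colv n C l) - Sw n C w by rewrite opprD addrA.
by rewrite IH ent (qpB hq hn) big_cons mulrA.
Qed.

Lemma peru_s2 (x u : V) i j P1 P2 : C i i = 2 -> C j j = 2 -> C i j = -1 -> C j i = -1 ->
 \sum_(s <- iota 0 3) cf q 2 s * 1 * \sum_(z <- Hs C q (x - u) (rev (wd 2 i j s))) z.1.1 * ind (sp C u z.1.2) (sp C (x - u) z.2) P1 P2 =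
 \sum_(s <- iota 0 3) cf q 2 s * 1 * ind (u, [::]) (sp C (x - u) (rev (wd 2 i j s))) P1 P2 +
 q ^- (2 * val ((x - u) 0 i) + val ((x - u) 0 j)) * \sum_(s <- iota 0 3) cf q 2 s * 1 * ind (sp C u (rev (wd 2 i j s))) (x - u, [::]) P1 P2.
Proof.
move=> Cii Cjj Cij Cji.
rewrite /= !big_cons !big_nil /= /wd /= !sp0 !qmE !ent !(qpB hq hn) ?Cii ?Cjj ?Cij ?Cji ?(qp2 hq hn) ?(qpm1 hq hn) ?qpz0 /cf qb20 qb21 qb22.
rewrite exprD mulnC exprM -[q ^+ (val ((x - u) 0 i))]/(qp q ((x - u) 0 i)) -[q ^+ (val ((x - u) 0 j))]/(qp q ((x - u) 0 j)).
by field; rewrite q0 !(qp_neq0 hq hn) oner_eq0.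
Qed.

Lemma peru_s1 (x u : V) i j P1 P2 : C i i = 2 -> C j j = 2 -> C i j = 0 -> C j i = 0 ->
 \sum_(s <- iota 0 2) cf q 1 s * 1 * \sum_(z <- Hs C q (x - u) (rev (wd 1 i j s))) z.1.1 * ind (sp C u z.1.2) (sp C (x - u) z.2) P1 P2 =
 \sum_(s <- iota 0 2) cf q 1 s * 1 * ind (u, [::]) (sp C (x - u) (rev (wd 1 i j s))) P1 P2 +
 q ^- (1 * val ((x - u) 0 i) + val ((x - u) 0 j)) * \sum_(s <- iota 0 2) cf q 1 s * 1 * ind (sp C u (rev (wd 1 i j s))) (x - u, [::]) P1 P2.
Proof.
move=> Cii Cjj Cij Cji.
rewrite /= !big_cons !big_nil /= /wd /= !sp0 !qmE !ent !(qpB hq hn) ?Cii ?Cjj ?Cij ?Cji ?(qp2 hq hn) ?(qpm1 hq hn) ?qpz0 /cf qb10 qb11.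
rewrite exprD mul1n -[q ^+ (val ((x - u) 0 i))]/(qp q ((x - u) 0 i)) -[q ^+ (val ((x - u) 0 j))]/(qp q ((x - u) 0 j)).
by field; rewrite ?q0 ?(qp_neq0 hq hn) ?oner_eq0.
Qed.


End Fin.


End Impl.

Theorem mainTheorem4 (k : fieldType) (n : nat) (q : k) (t : nat) (C : 'M[int]_t) :
  (5 <= n)%N -> n.-primitive_root q -> simply_laced_cartan C ->
  forall (x : 'rV['Z_n]_t) (i j : 'I_t), i != j ->
    teqPi C q
      (Delta C q (omega C q x i j))
      (flatten [seq tscale (q ^+ (kappa C i j * val (u 0 i) + val (u 0 j)))
                      (etens (ebasis k u) (omega C q (x - u) i j)) | u : 'rV['Z_n]_t <- allv n t] ++
       flatten [seq etens (omega C q u i j) (ebasis k (x - u)) | u : 'rV['Z_n]_t <- allv n t])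
    /\
    teqPi C q
      (Delta C q (omegas C q x i j))
      (flatten [seq etens (ebasis k u) (omegas C q (x - u) i j) | u : 'rV['Z_n]_t <- allv n t] ++
       flatten [seq tscale (q ^- (kappa C i j * val ((x - u) 0 i) + val ((x - u) 0 j)))
                      (etens (omegas C q u i j) (ebasis k (x - u))) | u : 'rV['Z_n]_t <- allv n t]).
Proof.
move=> hn hq [Cd Coff Csym _] x i j ij.
have Cji : C j i = C i j by rewrite Csym.
have Cii := Cd i; have Cjj := Cd j.
have hk : (C i j = 0 /\ kappa C i j = 1%N) \/ (C i j = -1 /\ kappa C i j = 2%N).
  by rewrite /kappa; case: (Coff i j ij) => ->; [left|right].
split; apply: teqPi_of => P1 P2.
- rewrite lhs_n rhs_n; apply: eq_bigr => u _.
  case: hk => [[e K]|[e K]]; rewrite K.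
    by apply: peru_n1 => //; rewrite ?Cji e.
  by apply: peru_n2 => //; rewrite ?Cji e.
- rewrite lhs_s rhs_s; apply: eq_bigr => u _.
  case: hk => [[e K]|[e K]]; rewrite K.
    by apply: peru_s1 => //; rewrite ?Cji e.
  by apply: peru_s2 => //; rewrite ?Cji e.
Qed.
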